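(* Let $K$ be a field of characteristic $\neq 2$, let $n\ge 1$, and let $\mathcal C$ be an evolution algebra of a ''chicken'' population (EACP) over $K$ with natural basis $\{h_1,\dots,h_n,r\}$ and structural constants $a_{ij},b_i\in K$ ($i,j=1,\dots,n$). Then $\mathcal C$ is associative if and only if $$\sum_{j=1}^n a_{ij}a_{jk}=0\quad\text{and}\quad b_i=0\qquad\text{for all } i,k=1,\dots,n.$$
   Context: An EACP over a field $K$ (characteristic $\neq 2$) is a $K$-algebra $\mathcal C$ with a basis $\{h_1,\dots,h_n,r\}$ (called a natural basis) whose multiplication is determined by bilinearity from $$h_ir=rh_i=\tfrac12\Big(\sum_{j=1}^n a_{ij}h_j+b_ir\Big),\qquad h_ih_j=0\ (i,j=1,\dots,n),\qquad rr=0,$$ for some constants $a_{ij},b_i\in K$. The $n\times(n+1)$ matrix $M$ whose $i$-th row is $(a_{i1},\dots,a_{in},b_i)$ is called the matrix of structural constants. *)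

(* Defs.v *)
From HB Require Import structures.
From mathcomp Require Import all_boot all_order all_algebra.
Set Implicit Arguments. Unset Strict Implicit. Unset Printing Implicit Defensive.
Import Order.TTheory GRing.Theory Num.Theory.
Local Open Scope ring_scope.

(* The EACP with natural basis {h_1,...,h_n, r} is modelled on the coordinate
   space 'rV[K]_(n.+1): the basis vector with index [lift ord_max j] is h_j
   (j : 'I_n) and the basis vector with index [ord_max] is r. *)

Definition eacp_basis (K : fieldType) (n : nat) (p : 'I_n.+1) : 'rV[K]_n.+1 :=
  delta_mx 0 p.

Definition eacp_hr (K : fieldType) (n : nat) (a : 'I_n -> 'I_n -> K)
  (b : 'I_n -> K) (i : 'I_n) : 'rV[K]_n.+1 :=
  2%:R^-1 *: (\sum_(j < n) a i j *: eacp_basis K (lift ord_max j)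
              + b i *: eacp_basis K ord_max).

(* multiplication table on the natural basis:
   h_i r = r h_i as above, h_i h_j = 0, r r = 0 *)
Definition eacp_table (K : fieldType) (n : nat) (a : 'I_n -> 'I_n -> K)
  (b : 'I_n -> K) (p q : 'I_n.+1) : 'rV[K]_n.+1 :=
  match unlift ord_max p, unlift ord_max q with
  | Some i, None => eacp_hr a b i
  | None, Some i => eacp_hr a b i
  | _, _ => 0
  end.

Definition eacp_mul (K : fieldType) (n : nat) (a : 'I_n -> 'I_n -> K)
  (b : 'I_n -> K) (x y : 'rV[K]_n.+1) : 'rV[K]_n.+1 :=
  \sum_(p < n.+1) \sum_(q < n.+1) (x 0 p * y 0 q) *: eacp_table a b p q.

Definition eacp_associative (K : fieldType) (n : nat)
  (a : 'I_n -> 'I_n -> K) (b : 'I_n -> K) : Prop :=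
  forall x y z : 'rV[K]_n.+1,
    eacp_mul a b (eacp_mul a b x y) z = eacp_mul a b x (eacp_mul a b y z).

(* Main.v *)
Require Import Defs.
From HB Require Import structures.
From mathcomp Require Import all_boot all_order all_algebra.
Import Order.TTheory GRing.Theory Num.Theory.
Local Open Scope ring_scope.

Section S.
Variables (K : fieldType) (n : nat) (a : 'I_n -> 'I_n -> K) (b : 'I_n -> K).

Lemma hr_lift i k : eacp_hr a b i 0 (lift ord_max k) = 2%:R^-1 * a i k.
Proof.
rewrite /eacp_hr !mxE summxE. under eq_bigr do rewrite mxE /eacp_basis mxE. rewrite eqxx /=.
rewrite eq_sym (negbTE (neq_lift _ _)) mulr0 addr0; congr (_ * _).
rewrite (bigD1 k) //= big1 ?addr0; first by rewrite eqxx mulr1.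
by move=> j jk; rewrite (inj_eq (@lift_inj _ _)) eq_sym (negbTE jk) mulr0.
Qed.

Lemma hr_max i : eacp_hr a b i 0 ord_max = 2%:R^-1 * b i.
Proof.
rewrite /eacp_hr !mxE summxE. under eq_bigr do rewrite mxE /eacp_basis mxE. rewrite eqxx /= big1 ?add0r ?eqxx ?mulr1 //.
by move=> j _; rewrite (negbTE (neq_lift _ _)) mulr0.
Qed.

Definition xr (x : 'rV[K]_n.+1) := x 0 ord_max.
Definition xh (x : 'rV[K]_n.+1) i := x 0 (lift ord_max i).

Lemma mulE x y : eacp_mul a b x y =
  \sum_(i < n) (xh x i * xr y + xr x * xh y i) *: eacp_hr a b i.
Proof.
rewrite /eacp_mul (bigD1_ord ord_max) //= (bigD1_ord ord_max) //=.
rewrite /eacp_table unlift_none scaler0 add0r.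
rewrite addrC -big_split /=; apply: eq_bigr => i _.
rewrite liftK (bigD1_ord ord_max) //= unlift_none big1 ?addr0;
    last by move=> j _; rewrite liftK scaler0.
by rewrite scalerDl.
Qed.

Lemma mulC x y : eacp_mul a b x y = eacp_mul a b y x.
Proof. rewrite !mulE; apply: eq_bigr => i _; congr (_ *: _); rewrite addrC [_ * xr x]mulrC [xr y * _]mulrC. done. Qed.

Lemma mul_entry x y p : eacp_mul a b x y 0 p =
  \sum_(i < n) (xh x i * xr y + xr x * xh y i) * eacp_hr a b i 0 p.
Proof. by rewrite mulE summxE; apply: eq_bigr => i _; rewrite mxE. Qed.

Lemma xh_basis_lift (i j : 'I_n) : xh (eacp_basis K (lift ord_max i)) j = (i == j)%:R.
Proof. by rewrite /xh /eacp_basis mxE eqxx /= (inj_eq (@lift_inj _ _)) eq_sym. Qed.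
Lemma xr_basis_lift (i : 'I_n) : xr (eacp_basis K (lift ord_max i)) = 0.
Proof. by rewrite /xr /eacp_basis mxE eqxx (negbTE (neq_lift _ _)). Qed.
Lemma xh_basis_max (j : 'I_n) : xh (eacp_basis K ord_max) j = 0.
Proof. by rewrite /xh /eacp_basis mxE eqxx eq_sym (negbTE (neq_lift _ _)). Qed.
Lemma xr_basis_max : xr (eacp_basis K ord_max) = 1.
Proof. by rewrite /xr /eacp_basis mxE !eqxx. Qed.

Lemma mul0 x : eacp_mul a b x 0 = 0.
Proof. by rewrite mulE big1 // => l _; rewrite /xh /xr !mxE !mulr0 addr0 scale0r. Qed.

Lemma mul_lift_max (i : 'I_n) : eacp_mul a b (eacp_basis K (lift ord_max i)) (eacp_basis K ord_max) = eacp_hr a b i.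
Proof.
rewrite mulE (bigD1 i) //= big1 ?addr0.
  by rewrite xh_basis_lift xr_basis_max xr_basis_lift xh_basis_max eqxx !(mul0r, mulr0, mulr1, addr0) scale1r.
by move=> l li; rewrite xh_basis_lift xr_basis_max xr_basis_lift xh_basis_max eq_sym (negbTE li) !(mul0r, mulr0, addr0) scale0r.
Qed.

Lemma mul_max_max : eacp_mul a b (eacp_basis K ord_max) (eacp_basis K ord_max) = 0.
Proof. by rewrite mulE big1 // => l _; rewrite xh_basis_max xr_basis_max !(mul0r, mulr0) addr0 scale0r. Qed.

Lemma mul_lift_lift (i : 'I_n) : eacp_mul a b (eacp_basis K (lift ord_max i)) (eacp_basis K (lift ord_max i)) = 0.
Proof. by rewrite mulE big1 // => l _; rewrite xh_basis_lift xr_basis_lift !(mul0r, mulr0) addr0 scale0r. Qed.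

Lemma mul_hr_entry x y (k : 'I_n) : eacp_mul a b x y 0 (lift ord_max k) =
  \sum_(i < n) (xh x i * xr y + xr x * xh y i) * (2%:R^-1 * a i k).
Proof. by rewrite mul_entry; apply: eq_bigr => i _; rewrite hr_lift. Qed.
Lemma mul_r_entry x y : eacp_mul a b x y 0 ord_max =
  \sum_(i < n) (xh x i * xr y + xr x * xh y i) * (2%:R^-1 * b i).
Proof. by rewrite mul_entry; apply: eq_bigr => i _; rewrite hr_max. Qed.

End S.

From mathcomp Require Import ring.

Theorem mainTheorem1 (K : fieldType) (hK : (2%:R : K) != 0) (n : nat)
  (hn : (0 < n)%N) (a : 'I_n -> 'I_n -> K) (b : 'I_n -> K) :
  eacp_associative a b <->
  ((forall i k : 'I_n, \sum_(j < n) a i j * a j k = 0) /\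
   (forall i : 'I_n, b i = 0)).
Proof.
have h2 : (2%:R : K)^-1 != 0 by rewrite invr_eq0.
split.
- move=> H; split.
  + move=> i k.
    have := H (eacp_basis K (lift ord_max i)) (eacp_basis K ord_max) (eacp_basis K ord_max).
    rewrite mul_lift_max mul_max_max mul0 => E.
    have := congr1 (fun v : 'rV[K]_n.+1 => v 0 (lift ord_max k)) E.
    rewrite /= mul_hr_entry mxE => E'.
    have : \sum_(j < n) (2%:R^-1 * 2%:R^-1) * (a i j * a j k) = 0.
      rewrite -[X in _ = X]E'; apply: eq_bigr => j _.
      rewrite xr_basis_max xh_basis_max /xh hr_lift; ring.
    rewrite -mulr_sumr => /eqP; rewrite mulf_eq0 => /orP[|/eqP//].
    by rewrite mulf_eq0 (negbTE h2).
  + move=> i.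
    have := H (eacp_basis K (lift ord_max i)) (eacp_basis K (lift ord_max i)) (eacp_basis K ord_max).
    rewrite mul_lift_lift mulC mul0 mul_lift_max => E.
    have := congr1 (fun v : 'rV[K]_n.+1 => v 0 ord_max) E.
    rewrite /= mul_r_entry mxE (bigD1 i) //= big1 ?addr0; last first.
      move=> j ji; rewrite xh_basis_lift xr_basis_lift eq_sym (negbTE ji).
      by rewrite !(mul0r, addr0).
    rewrite xh_basis_lift xr_basis_lift eqxx /xr hr_max mul0r addr0 mul1r.
    move/esym/eqP; rewrite mulf_eq0 orbb mulf_eq0 (negbTE h2) /= => /eqP//.
- move=> [hA hb].
  have key : forall x y z, eacp_mul a b (eacp_mul a b x y) z = 0.
    move=> x y z.
    have xr0 : xr _ _ (eacp_mul a b x y) = 0.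
      by rewrite /xr mul_r_entry big1 // => i _; rewrite hb !mulr0.
    apply/rowP => p; rewrite mxE.
    case: (unliftP ord_max p) => [m ->|->].
    + rewrite mul_hr_entry xr0.
      transitivity (\sum_(k < n) \sum_(i < n)
         ((xh K n x i * xr K n y + xr K n x * xh K n y i) * xr K n z * 2%:R^-1 * 2%:R^-1) * (a i k * a k m)).
        apply: eq_bigr => k _.
        rewrite /xh mul_hr_entry mul0r addr0 !mulr_suml; apply: eq_bigr => i _.
        rewrite /xh; ring.
      rewrite exchange_big big1 //= => i _.
      by rewrite -mulr_sumr hA mulr0.
    + by rewrite mul_r_entry big1 // => k _; rewrite hb !mulr0.
  by move=> x y z; rewrite key mulC key.
Qed.
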